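(* Let $\Omega$ be a weighted clone, $\omega_1,\dots,\omega_n\in\Omega$, and $c_1,\dots,c_n\ge0$ real numbers. Let $\ell_i$ denote the arity of $\omega_i$. For each $1\le i\le n$ and $1\le j\le\ell_i$ let $g_{i,j}\in\mathrm{supp}(\Omega)$ be a $k$-ary operation (for a fixed $k$). If the function $\mu=\sum_{i=1}^n c_i\cdot\omega_i[g_{i,1},\dots,g_{i,\ell_i}]$ is a proper weighting, then $\mu\in\Omega$.
   Context: $D$ is a fixed finite set with $|D|\ge2$. A $k$-ary operation is $f:D^k\to D$; $\mathbf{O}^{(k)}_D$ is the set of $k$-ary operations. Projections: $e^{(k)}_i(x_1,\dots,x_k)=x_i$; $\mathbf{J}_D$ is the set of all projections, $\mathbf{J}_D^{(k)}$ the $k$-ary ones. Superposition of operations: $f[g_1,\dots,g_k](\mathbf{x})=f(g_1(\mathbf{x}),\dots,g_k(\mathbf{x}))$. A $k$-ary (proper) weighting is a function $\omega:\mathbf{O}^{(k)}_D\to\mathbb{R}$ with $\sum_f\omega(f)=0$ and $\omega(f)<0$ only if $f$ is a projection (a function with zero sum that is negative on some non-projection is an improper weighting). $\mathrm{supp}(\omega)=\mathbf{J}_D^{(k)}\cup\{f:\omega(f)>0\}$, and for a non-empty set $\Omega$ of weightings, $\mathrm{supp}(\Omega)=\mathbf{J}_D\cup\bigcup_{\omega\in\Omega}\mathrm{supp}(\omega)$. For $\omega:\mathbf{O}^{(\ell)}_D\to\mathbb{R}$ and $k$-ary $g_1,\dots,g_\ell$, the superposition $\omega[g_1,\dots,g_\ell]:\mathbf{O}^{(k)}_D\to\mathbb{R}$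 is $\omega[g_1,\dots,g_\ell](f')=\sum_{f:f[g_1,\dots,g_\ell]=f'}\omega(f)$; it is proper if it is a proper weighting. Topology: the $k$-ary weightings lie in $\mathbb{R}^{\mathbf{O}^{(k)}_D}$ (Euclidean topology), with the disjoint union topology over $k$. A weighted clone is a non-empty set $\Omega$ of weightings closed under scaling by non-negative reals, addition of weightings of equal arity, and proper superposition with operations from $\mathrm{supp}(\Omega)$, and topologically closed. *)

(* Defs.v *)
From HB Require Import structures.
From mathcomp Require Import all_boot all_order all_algebra.
From mathcomp Require Import reals.
Set Implicit Arguments. Unset Strict Implicit. Unset Printing Implicit Defensive.
Import Order.TTheory GRing.Theory Num.Theory.
Local Open Scope ring_scope.

Section WeightedClones.
Variable D : finType.
Variable R : realType.

Definition op (k : nat) := {ffun {ffun 'I_k -> D} -> D}.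

Definition proj (k : nat) (i : 'I_k) : op k := [ffun x : {ffun 'I_k -> D} => x i].

Definition is_proj (k : nat) (f : op k) : Prop := exists i : 'I_k, f = proj i.

Definition is_weighting (k : nat) (w : op k -> R) : Prop :=
  (\sum_(f : op k) w f = 0) /\ (forall f : op k, w f < 0 -> is_proj f).

Definition wset := forall k : nat, (op k -> R) -> Prop.

Definition supp (Om : wset) (k : nat) (f : op k) : Prop :=
  is_proj f \/ exists w : op k -> R, Om k w /\ 0 < w f.

Definition comp (l k : nat) (f : op l) (gs : 'I_l -> op k) : op k :=
  [ffun x : {ffun 'I_k -> D} => f [ffun j => gs j x]].

Definition wsup (l k : nat) (w : op l -> R) (gs : 'I_l -> op k) : op k -> R :=
  fun f' => \sum_(f : op l | comp f gs == f') w f.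

Record weighted_clone (Om : wset) : Prop := {
  wc_nonempty : exists k (w : op k -> R), Om k w;
  wc_weighting : forall k (w : op k -> R), Om k w -> is_weighting w;
  wc_scale : forall k (w : op k -> R) (c : R), 0 <= c -> Om k w ->
    Om k (fun f => c * w f);
  wc_add : forall k (w1 w2 : op k -> R), Om k w1 -> Om k w2 ->
    Om k (fun f => w1 f + w2 f);
  wc_sup : forall l k (w : op l -> R) (gs : 'I_l -> op k),
    Om l w -> (forall j, supp Om (gs j)) -> is_weighting (wsup w gs) ->
    Om k (wsup w gs);
  (* topologically closed: each arity component is closed in R^(O^(k))
     (closure in the sup-norm, equivalent to the Euclidean topology) *)
  wc_closed : forall k (w : op k -> R),
    (forall e : R, 0 < e -> exists w' : op k -> R,
        Om k w' /\ forall f, `|w f - w' f| < e) ->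
    Om k w
}.

End WeightedClones.

(* Main.v *)
Require Import Defs.
From HB Require Import structures.
From mathcomp Require Import all_boot all_order all_algebra.
From mathcomp Require Import reals.
From Stdlib Require Import FunctionalExtensionality.
Import Order.TTheory GRing.Theory Num.Theory.
Local Open Scope ring_scope.

Lemma comp_proj (D : finType) (l k : nat) (a : 'I_l) (G : 'I_l -> op D k) :
  @Defs.comp D l k (Defs.proj D a) G = G a.
Proof. by apply/ffunP => x; rewrite !ffunE. Qed.

Lemma comp_comp (D : finType) (m l k : nat) (f : op D m) (P : 'I_m -> op D l)
  (G : 'I_l -> op D k) :
  @Defs.comp D l k (@Defs.comp D m l f P) G = @Defs.comp D m k f (fun j => @Defs.comp D l k (P j) G).
Proof.
apply/ffunP => x; rewrite !ffunE; congr (f _); apply/ffunP => j.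
by rewrite !ffunE.
Qed.

Lemma wsup_comp (D : finType) (R : realType) (m l k : nat) (w : op D m -> R)
  (P : 'I_m -> op D l) (G : 'I_l -> op D k) (f'' : op D k) :
  wsup (wsup w P) G f'' = wsup w (fun j => Defs.comp (P j) G) f''.
Proof.
rewrite /wsup.
rewrite (partition_big (fun f => Defs.comp f P) (fun f' => Defs.comp f' G == f'')); last first.
  by move=> f; rewrite comp_comp.
apply: eq_bigr => f' /eqP Hf'.
apply: eq_bigl => f; rewrite -comp_comp.
by case: eqP => [->|]; rewrite ?andbF // Hf' eqxx.
Qed.

Lemma wsup_proper (D : finType) (R : realType) (m l : nat) (w : op D m -> R)
  (P : 'I_m -> 'I_l) :
  is_weighting w -> is_weighting (wsup w (fun j => Defs.proj D (P j))).
Proof.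
move=> [Hs Hn]; split.
  rewrite /wsup -[RHS]Hs [RHS](partition_big (fun f => Defs.comp f (fun j => Defs.proj D (P j)))
     (fun _ => true)) //.
move=> f' Hlt.
case: (boolP [exists f, (Defs.comp f (fun j => Defs.proj D (P j)) == f') && (w f < 0)]).
  move/existsP => [f /andP [/eqP Hf Hw]].
  have [a Ha] := Hn f Hw.
  rewrite -Hf Ha comp_proj; by exists (P a).
move=> Hne; exfalso; move: Hlt; apply/negP; rewrite -leNgt.
apply: sumr_ge0 => f Hf; rewrite leNgt; apply/negP => Hw.
move/negP: Hne; apply; apply/existsP; exists f; by rewrite Hf Hw.
Qed.

Lemma om_sum_seq (D : finType) (R : realType) (Om : wset D R)
  (HOm : weighted_clone Om) (n L : nat) (F : 'I_n -> op D L -> R) :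
  (forall i, Om L (F i)) -> forall s, s != [::] ->
  Om L (fun f => \sum_(i <- s) F i f).
Proof.
move=> HF [//|x s] _; elim: s x => [|y s IH] x.
  have -> : (fun f => \sum_(i <- [:: x]) F i f) = F x.
    by apply: functional_extensionality => f; rewrite big_cons big_nil addr0.
  exact: HF.
have -> : (fun f => \sum_(i <- [:: x, y & s]) F i f) =
  (fun f => F x f + \sum_(i <- y :: s) F i f).
  by apply: functional_extensionality => f; rewrite big_cons.
apply: (wc_add HOm); [exact: HF | exact: IH].
Qed.

Lemma wsup_lin (D : finType) (R : realType) (n l k : nat) (c : 'I_n -> R)
  (W : 'I_n -> op D l -> R) (G : 'I_l -> op D k) (f : op D k) :
  wsup (fun f' => \sum_(i <- index_enum 'I_n) c i * W i f') G f =
  \sum_(i < n) c i * wsup (W i) G f.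
Proof.
rewrite /wsup exchange_big /=; apply: eq_bigr => i _.
by rewrite -mulr_sumr.
Qed.

Theorem lemma3 (D : finType) (R : realType) (Om : wset D R)
  (HD : (1 < #|D|)%N) (HOm : weighted_clone Om)
  (n : nat) (Hn : (0 < n)%N)
  (ls : 'I_n -> nat) (ws : forall i : 'I_n, op D (ls i) -> R)
  (Hws : forall i, Om (ls i) (ws i))
  (c : 'I_n -> R) (Hc : forall i, 0 <= c i)
  (k : nat) (gs : forall i : 'I_n, 'I_(ls i) -> op D k)
  (Hgs : forall i j, supp Om (gs i j)) :
  is_weighting (fun f : op D k => \sum_(i < n) c i * wsup (ws i) (gs i) f) ->
  Om k (fun f : op D k => \sum_(i < n) c i * wsup (ws i) (gs i) f).
Proof.
move=> Hmu.
pose L := #|{: {i : 'I_n & 'I_(ls i)}}|.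
pose G : 'I_L -> op D k := fun a => gs (tag (enum_val a)) (tagged (enum_val a)).
pose P : forall i : 'I_n, 'I_(ls i) -> 'I_L :=
  fun i j => enum_rank (Tagged (fun i => 'I_(ls i)) j).
have HPG : forall i, (fun j => Defs.comp (Defs.proj D (P i j)) G) = gs i.
  move=> i; apply: functional_extensionality => j.
  by rewrite comp_proj /G /P enum_rankK.
pose F : 'I_n -> op D L -> R :=
  fun i f => c i * wsup (ws i) (fun j => Defs.proj D (P i j)) f.
have HF : forall i, Om L (F i).
  move=> i; apply: (wc_scale HOm (Hc i)); apply: (wc_sup HOm).
  - exact: Hws.
  - by move=> j; left; exists (P i j).
  - apply: wsup_proper; exact: (wc_weighting HOm (Hws i)).
have HW : Om L (fun f => \sum_(i <- index_enum 'I_n) F i f).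
  have := @om_sum_seq D R Om HOm n L F HF (index_enum 'I_n); apply.
  apply/eqP => E; move: (mem_index_enum (Ordinal Hn)); by rewrite E.
have HE : wsup (fun f => \sum_(i <- index_enum 'I_n) F i f) G =
   (fun f : op D k => \sum_(i < n) c i * wsup (ws i) (gs i) f).
  apply: functional_extensionality => f.
  rewrite (@wsup_lin D R n L k c (fun i => wsup (ws i) (fun j => Defs.proj D (P i j)))).
  apply: eq_bigr => i _.
  by rewrite (@wsup_comp D R (ls i) L k (ws i) (fun j => Defs.proj D (P i j)) G f) HPG.
have HG : forall j, supp Om (G j) by move=> j; exact: Hgs.
have H1 := @wc_sup D R Om HOm L k _ G HW HG.
rewrite HE in H1; exact: H1 Hmu.
Qed.
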